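(* Let $\mathcal{H}$ be a finite-dimensional Hilbert space, $\ket{h}\in\mathcal{H}$ a unit vector, and $W_1,\ldots,W_l$ subspaces of $\mathcal{H}$. Let $0<\alpha_j<1$ for $j\in[l]$, set $\alpha:=\min_j\alpha_j$ and $\epsilon_j:=\|\Pi_{W_j}\ket{h}\|_2^2$. Let $\mathbf{W}_{(\alpha_1,\ldots,\alpha_l)}$ be the $(\alpha_1,\ldots,\alpha_l)$-tilted span of $W_1,\ldots,W_l$ (defined in the context), and view $\ket h$ as a vector of $\tilde{\mathcal{H}}$ via the identity embedding. Then $$\max_{j\in[l]}(1-\alpha_j)\epsilon_j\ \le\ \|\Pi_{\mathbf{W}_{(\alpha_1,\ldots,\alpha_l)}}\ket{h}\|_2^2\ \le\ \frac{1-\alpha}{\alpha}\sum_{j=1}^l\epsilon_j.$$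
   Context: Tilted span: Let $\mathcal{H}_1,\ldots,\mathcal{H}_l$ be Hilbert spaces each of dimension $\dim\mathcal{H}$, and $\tilde{\mathcal{H}}:=\mathcal{H}\oplus\mathcal{H}_1\oplus\cdots\oplus\mathcal{H}_l$ (orthogonal direct sum). Let $\mathcal{T}_j$ be a linear map taking $\mathcal{H}$ isometrically onto $\mathcal{H}_j$. For $0<\alpha_j<1$ define the isometric embedding $\mathcal{T}_{j,\alpha_j}:=\sqrt{1-\alpha_j}\,\mathbb{1}_{\mathcal{H}}+\sqrt{\alpha_j}\,\mathcal{T}_j:\mathcal{H}\to\tilde{\mathcal{H}}$, where $\mathbb{1}_{\mathcal{H}}$ is the identity embedding of $\mathcal{H}$ into $\tilde{\mathcal{H}}$. For subspaces $W_1,\dots,W_l\le\mathcal{H}$, the $(\alpha_1,\ldots,\alpha_l)$-tilted span is the subspace $\mathbf{W}_{(\alpha_1,\ldots,\alpha_l)}:=\sum_{j=1}^l\mathcal{T}_{j,\alpha_j}(W_j)\le\tilde{\mathcal{H}}$ (a sum, not necessarily direct); if all $\alpha_j=\alpha$ it is written $\mathbf{W}_\alpha$. $\Pi_X$ denotes the orthogonal projection onto a subspace $X$. *)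

(* Defs.v *)
From HB Require Import structures.
From mathcomp Require Import all_boot all_order all_algebra all_field.
Set Implicit Arguments. Unset Strict Implicit. Unset Printing Implicit Defensive.
Import Order.TTheory GRing.Theory Num.Theory.
Local Open Scope ring_scope.

(* Finite-dimensional Hilbert spaces are modelled as row spaces 'rV[algC]_n with
   the standard inner product <u,v> = \sum_i u_i * conj(v_i).  Subspaces are
   mxalgebra row spaces (matrices, read with %MS).  Linear maps act on the
   right of row vectors. *)

Definition adjmx (m n : nat) (A : 'M[algC]_(m, n)) : 'M[algC]_(n, m) :=
  (map_mx Num.conj A)^T.

Definition norm2 (n : nat) (v : 'rV[algC]_n) : algC :=
  \sum_(i < n) `|v 0 i| ^+ 2.

Definition orth_proj (m n : nat) (X : 'M[algC]_(m, n)) : 'M[algC]_n :=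
  let B := row_base X in
  adjmx B *m invmx (B *m adjmx B) *m B.

(* A matrix E : 'M_(n, m) is an isometric embedding 'rV_n -> 'rV_m, x |-> x *m E *)
Definition isometry_mx (n m : nat) (E : 'M[algC]_(n, m)) : Prop :=
  E *m adjmx E = 1%:M.

Definition tilted_map (n m : nat) (E T : 'M[algC]_(n, m)) (a : algC)
  : 'M[algC]_(n, m) :=
  sqrtC (1 - a) *: E + sqrtC a *: T.

Definition tilted_span (n m l : nat) (E : 'M[algC]_(n, m))
  (T : 'I_l -> 'M[algC]_(n, m)) (a : 'I_l -> algC) (W : 'I_l -> 'M[algC]_n)
  : 'M[algC]_m :=
  (\sum_(j < l) <<W j *m tilted_map E (T j) (a j)>>)%MS.

(* Main.v *)
Require Import Defs.
From HB Require Import structures.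
From mathcomp Require Import all_boot all_order all_algebra all_field.
From mathcomp.algebra_tactics Require Import ring.
Import Order.TTheory GRing.Theory Num.Theory.
Local Open Scope ring_scope.
Set Implicit Arguments. Unset Strict Implicit. Unset Printing Implicit Defensive.

Lemma adjmxE m n (A : 'M[algC]_(m, n)) i j : adjmx A i j = (A j i)^*.
Proof. by rewrite /adjmx !mxE. Qed.

Lemma adjmxM m n p (A : 'M[algC]_(m, n)) (B : 'M[algC]_(n, p)) :
  adjmx (A *m B) = adjmx B *m adjmx A.
Proof.
by rewrite /adjmx map_mxM trmx_mul.
Qed.

Lemma adjmxK m n (A : 'M[algC]_(m, n)) : adjmx (adjmx A) = A.
Proof. by apply/matrixP => i j; rewrite /adjmx !mxE conjCK. Qed.

Lemma adjmxD m n (A B : 'M[algC]_(m, n)) : adjmx (A + B) = adjmx A + adjmx B.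
Proof. by apply/matrixP => i j; rewrite /adjmx !mxE rmorphD. Qed.

Lemma adjmxZ m n c (A : 'M[algC]_(m, n)) : adjmx (c *: A) = c^* *: adjmx A.
Proof. by apply/matrixP => i j; rewrite /adjmx !mxE rmorphM. Qed.

Lemma adjmx0 m n : adjmx (0 : 'M[algC]_(m, n)) = 0.
Proof. by apply/matrixP => i j; rewrite /adjmx !mxE rmorph0. Qed.

Lemma adjmx_sum m n (I : finType) (F : I -> 'M[algC]_(m, n)) :
  adjmx (\sum_i F i) = \sum_i adjmx (F i).
Proof.
apply/matrixP => i j; rewrite /adjmx !mxE !summxE rmorph_sum.
by apply: eq_bigr => k _; rewrite !mxE.
Qed.

Definition ip k (u v : 'rV[algC]_k) : algC := (u *m adjmx v) 0 0.

Lemma norm2E k (v : 'rV[algC]_k) : norm2 v = ip v v.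
Proof.
rewrite /norm2 /ip mxE; apply: eq_bigr => i _.
by rewrite adjmxE normCK.
Qed.

Lemma ip_ge0 k (v : 'rV[algC]_k) : 0 <= ip v v.
Proof. by rewrite -norm2E; apply: sumr_ge0 => i _; rewrite exprn_ge0. Qed.

Lemma ip_eq0 k (v : 'rV[algC]_k) : ip v v = 0 -> v = 0.
Proof.
rewrite -norm2E /norm2 => /psumr_eq0P H.
apply/rowP => i; rewrite mxE.
have /eqP := H (fun j _ => exprn_ge0 2 (normr_ge0 _)) i isT.
by rewrite expf_eq0 /= normr_eq0 => /eqP.
Qed.

Lemma ip_conj k (u v : 'rV[algC]_k) : ip v u = (ip u v)^*.
Proof. by rewrite /ip -adjmxE adjmxM adjmxK. Qed.

Lemma ipDl k (u1 u2 v : 'rV[algC]_k) : ip (u1 + u2) v = ip u1 v + ip u2 v.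
Proof. by rewrite /ip mulmxDl mxE. Qed.

Lemma ipZl k c (u v : 'rV[algC]_k) : ip (c *: u) v = c * ip u v.
Proof. by rewrite /ip -scalemxAl mxE. Qed.

Lemma ipDr k (u v1 v2 : 'rV[algC]_k) : ip u (v1 + v2) = ip u v1 + ip u v2.
Proof. by rewrite /ip adjmxD mulmxDr mxE. Qed.

Lemma ipZr k c (u v : 'rV[algC]_k) : ip u (c *: v) = c^* * ip u v.
Proof. by rewrite /ip adjmxZ -scalemxAr mxE. Qed.

Lemma ip0r k (u : 'rV[algC]_k) : ip u 0 = 0.
Proof. by rewrite /ip adjmx0 mulmx0 mxE. Qed.

Lemma ip_suml k (I : finType) (F : I -> 'rV[algC]_k) v :
  ip (\sum_i F i) v = \sum_i ip (F i) v.
Proof. by rewrite /ip mulmx_suml summxE. Qed.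

Lemma ip_sumr k (I : finType) (F : I -> 'rV[algC]_k) u :
  ip u (\sum_i F i) = \sum_i ip u (F i).
Proof. by rewrite /ip adjmx_sum mulmx_sumr summxE. Qed.

Lemma ipMr k p (u : 'rV[algC]_k) (v : 'rV[algC]_p) (A : 'M[algC]_(p, k)) :
  ip u (v *m A) = ip (u *m adjmx A) v.
Proof. by rewrite /ip adjmxM mulmxA. Qed.

Lemma ipMM k p (x y : 'rV[algC]_k) (A B : 'M[algC]_(k, p)) c :
  A *m adjmx B = c%:M -> ip (x *m A) (y *m B) = c * ip x y.
Proof.
by move=> H; rewrite /ip adjmxM mulmxA -(mulmxA x) H mul_mx_scalar -scalemxAl mxE.
Qed.

Lemma CSalg (N U z c : algC) :
  N*(N*U) + N*(-c*z) + (-z*(N*c) + -z*(-c*N)) = N*(N*U - z*c).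
Proof. ring. Qed.

Lemma CS k (u v : 'rV[algC]_k) : `|ip u v| ^+ 2 <= ip u u * ip v v.
Proof.
have [v0|nz] := eqVneq (ip v v) 0.
  rewrite (ip_eq0 v0) ip0r normr0 expr0n /=. by rewrite -(ip_eq0 v0) v0 mulr0.
set N := ip v v; set z := ip u v.
have Ngt0 : 0 < N by rewrite lt_def nz ip_ge0.
have cN : N^* = N by apply: conj_Creal; apply: ger0_real; exact: ltW.
have := ip_ge0 (N *: u + (- z) *: v).
rewrite !ipDl !ipDr !ipZl !ipZr cN rmorphN (ip_conj u v) -/z -/N.
rewrite CSalg.
rewrite pmulr_rge0 // subr_ge0 normCK. by rewrite [ip u u * N]mulrC.
Qed.

Lemma proj_unit m n (B : 'M[algC]_(m, n)) : row_free B -> B *m adjmx B \in unitmx.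
Proof.
move=> fB; rewrite -row_free_unit -kermx_eq0; apply/eqP/row_matrixP => i.
rewrite row0; set u := row i _.
have uM : u *m (B *m adjmx B) = 0 by apply/sub_kermxP; exact: row_sub.
have : ip (u *m B) (u *m B) = 0.
  by rewrite /ip adjmxM mulmxA -(mulmxA u) uM mul0mx mxE.
move/ip_eq0/eqP; rewrite mulmx_free_eq0 //; exact/eqP.
Qed.

Lemma orth_proj_sub m n (X : 'M[algC]_(m, n)) (h : 'rV_n) :
  (h *m orth_proj X <= X)%MS.
Proof.
rewrite /orth_proj mulmxA; apply: submx_trans (submxMl _ _) _.
by rewrite eq_row_base.
Qed.

Lemma proj_aux m n (B : 'M[algC]_(m, n)) (D : 'rV_m) (h : 'rV_n) :
  row_free B ->
  h *m (adjmx B *m invmx (B *m adjmx B) *m B) *m adjmx (D *m B) = h *m adjmx (D *m B).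
Proof.
move=> fB; have U := proj_unit fB.
by rewrite adjmxM -!mulmxA (mulmxA B) mulKmx.
Qed.

Lemma orth_proj_ip m n (X : 'M[algC]_(m, n)) (h v : 'rV_n) :
  (v <= X)%MS -> ip (h *m orth_proj X) v = ip h v.
Proof.
move=> vX; have : (v <= row_base X)%MS by rewrite eq_row_base.
case/submxP => D ->; rewrite /ip /orth_proj.
by rewrite proj_aux // row_base_free.
Qed.

Lemma mx4 m n p (a b c d : algC) (A B : 'M[algC]_(m, n)) (C D : 'M[algC]_(n, p)) :
  (a *: A + b *: B) *m (c *: C + d *: D) =
  (a * c) *: (A *m C) + (a * d) *: (A *m D) + (b * c) *: (B *m C) + (b * d) *: (B *m D).
Proof.
by rewrite mulmxDl !mulmxDr -!scalemxAl -!scalemxAr !scalerA addrA [_ * c]mulrC [_ * d]mulrC.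
Qed.

Lemma conj_sqrt (x : algC) : 0 <= x -> (sqrtC x)^* = sqrtC x.
Proof. by move=> x0; apply/conj_Creal/ger0_real; rewrite sqrtC_ge0. Qed.

Lemma GG_lemma n m (E Ti Tj : 'M[algC]_(n, m)) (ai aj : algC) (b : bool) :
  0 <= ai -> 0 <= aj -> 0 <= 1 - ai -> 0 <= 1 - aj ->
  E *m adjmx E = 1%:M -> E *m adjmx Ti = 0 -> E *m adjmx Tj = 0 ->
  Ti *m adjmx Tj = (b%:R)%:M ->
  tilted_map E Ti ai *m adjmx (tilted_map E Tj aj) =
   (sqrtC (1 - ai) * sqrtC (1 - aj) + b%:R * (sqrtC ai * sqrtC aj))%:M.
Proof.
move=> h1 h2 h3 h4 hE hEi hEj hT.
have TiE : Ti *m adjmx E = 0 by rewrite -[Ti]adjmxK -adjmxM hEi adjmx0.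
rewrite /tilted_map adjmxD !adjmxZ !conj_sqrt // mx4 hE hEj TiE hT.
rewrite !scaler0 addr0 addr0 scalemx1 scale_scalar_mx -raddfD /=.
by rewrite [_ * b%:R]mulrC.
Qed.

Lemma amgm (a s z e k : algC) : 0 < a -> 0 <= s -> s ^+ 2 = 1 - a -> 0 <= 1 - a ->
  0 <= z -> 0 <= e -> 0 <= k -> z ^+ 2 <= e * k ->
  s * z + s * z <= (1 - a) / a * e + a * k.
Proof.
move=> a0 s0 s2 a1 z0 e0 k0 zek.
set A := (1 - a) / a * e; set B := a * k.
have A0 : 0 <= A by rewrite mulr_ge0 // divr_ge0 // ltW.
have B0 : 0 <= B by rewrite mulr_ge0 // ltW.
have X0 : 0 <= s * z + s * z by rewrite addr_ge0 // mulr_ge0.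
rewrite -(ler_pXn2r (n:=2)) // ?nnegrE ?addr_ge0 //.
have -> : (s * z + s * z) ^+ 2 = 4 * ((1 - a) * z ^+ 2) by rewrite -s2; ring.
have AB : A * B = (1 - a) * (e * k).
  rewrite /A /B; have an : a != 0 by rewrite gt_eqF.
  by rewrite /A /B; field.
apply: (@le_trans _ _ (4 * (A * B))).
  by rewrite AB ler_wpM2l // ler_wpM2l.
have -> : (A + B) ^+ 2 = 4 * (A * B) + (A - B) ^+ 2 by ring.
rewrite lerDl -realEsqr; apply: rpredB; exact: ger0_real.
Qed.

Theorem proposition2
  (n l : nat) (l_gt0 : (0 < l)%N)
  (E : 'M[algC]_(n, n * l.+1)) (T : 'I_l -> 'M[algC]_(n, n * l.+1))
  (hE : isometry_mx E)
  (hT : forall j, isometry_mx (T j))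
  (hET : forall j, E *m adjmx (T j) = 0)
  (hTT : forall i j, i != j -> T i *m adjmx (T j) = 0)
  (h : 'rV[algC]_n) (h_unit : norm2 h = 1)
  (W : 'I_l -> 'M[algC]_n)
  (alpha : 'I_l -> algC) (alpha_pos : forall j, 0 < alpha j)
  (alpha_lt1 : forall j, alpha j < 1)
  (a : algC) (a_attained : exists j, a = alpha j)
  (a_min : forall j, a <= alpha j) :
  let eps := fun j => norm2 (h *m orth_proj (W j)) in
  let p := norm2 ((h *m E) *m orth_proj (tilted_span E T alpha W)) in
  (forall j, (1 - alpha j) * eps j <= p) /\
  p <= (1 - a) / a * \sum_(j < l) eps j.
Proof.
move=> eps p.
have al0 j : 0 <= alpha j by exact: ltW.
have al1 j : 0 <= 1 - alpha j by rewrite subr_ge0 ltW.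
pose G j := tilted_map E (T j) (alpha j).
have TT i j : T i *m adjmx (T j) = ((i == j)%:R)%:M.
  have [->|ne] := eqVneq i j; first by rewrite hT.
  by rewrite hTT //; apply/matrixP => x y; rewrite !mxE /= ?mul0rn ?mulr0n ?mul0r ?mulr0.
have GG i j : G i *m adjmx (G j) = (sqrtC (1 - alpha i) * sqrtC (1 - alpha j)
    + (i == j)%:R * (sqrtC (alpha i) * sqrtC (alpha j)))%:M.
  by apply: GG_lemma.
have EG j : E *m adjmx (G j) = (sqrtC (1 - alpha j))%:M.
  by rewrite /G /tilted_map adjmxD !adjmxZ !conj_sqrt // mulmxDr -!scalemxAr hE hET scaler0 addr0 scalemx1.
have GGjj j : G j *m adjmx (G j) = 1%:M.
  by rewrite GG eqxx mul1r -!expr2 !sqrtCK subrK.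
set S := tilted_span E T alpha W.
set q := h *m E *m orth_proj S.
have qS : (q <= S)%MS := orth_proj_sub S (h *m E).
have pq : p = ip q q by rewrite /p norm2E.
have pE : p = ip (h *m E) q by rewrite pq /q orth_proj_ip.
have p_ge0 : 0 <= p by rewrite pq ip_ge0.
have eps_ge0 j : 0 <= eps j by rewrite /eps norm2E ip_ge0.
have Wsub j : (W j *m G j <= S)%MS.
  by rewrite /S /tilted_span; apply: (sumsmx_sup j) => //; rewrite genmxE.
split.
  move=> j; set w := h *m orth_proj (W j).
  have wW : (w <= W j)%MS := orth_proj_sub _ _.
  have ew : eps j = ip h w by rewrite /eps norm2E orth_proj_ip.
  have vS : (w *m G j <= S)%MS := submx_trans (submxMr _ wW) (Wsub j).
  have hv : ip q (w *m G j) = sqrtC (1 - alpha j) * eps j.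
    by rewrite /q orth_proj_ip // ipMr -mulmxA EG mul_mx_scalar ipZl ew.
  have vv : ip (w *m G j) (w *m G j) = eps j.
    by rewrite (ipMM _ _ (GGjj j)) mul1r /eps norm2E.
  have := CS q (w *m G j).
  rewrite hv vv -pq normrM exprMn ger0_norm ?sqrtC_ge0 // sqrtCK ger0_norm // expr2.
  have [e0|nz] := eqVneq (eps j) 0; first by rewrite e0 !mulr0 => _.
  have ep : 0 < eps j by rewrite lt_def nz eps_ge0.
  by rewrite mulrA ler_pM2r.
have := qS; rewrite /S /tilted_span => /sub_sumsmxP [u qE].
have sub j : (u j *m <<W j *m G j>> <= W j *m G j)%MS.
  by apply: submx_trans (submxMl _ _) _; rewrite genmxE.
pose c j := u j *m <<W j *m G j>>%MS *m pinvmx (W j *m G j).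
have cE j : u j *m <<W j *m G j>>%MS = c j *m W j *m G j.
  by rewrite -mulmxA mulmxKpV.
pose w j := c j *m W j.
have q2 : q = \sum_j w j *m G j by rewrite qE; apply: eq_bigr => j _; rewrite cE.
have wW j : (w j <= W j)%MS by apply: submxMl.
have p1 : p = \sum_j sqrtC (1 - alpha j) * ip h (w j).
  rewrite pE q2 ip_sumr; apply: eq_bigr => j _.
  by rewrite ipMr -mulmxA EG mul_mx_scalar ipZl.
pose x := \sum_j sqrtC (1 - alpha j) *: w j.
have qG i : q *m adjmx (G i) = sqrtC (1 - alpha i) *: x + alpha i *: w i.
  rewrite q2 mulmx_suml.
  under eq_bigr do rewrite -mulmxA GG mul_mx_scalar scalerDl.
  rewrite big_split /=; congr (_ + _).
    by rewrite /x scaler_sumr; apply: eq_bigr => j _; rewrite scalerA mulrC.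
  rewrite (bigD1 i) //= eqxx mul1r -expr2 sqrtCK big1 ?addr0 // => j /negbTE ->.
  by rewrite mul0r scale0r.
have p2 : p = ip x x + \sum_i alpha i * ip (w i) (w i).
  transitivity (ip q (\sum_j w j *m G j)); first by rewrite pq -q2.
  rewrite ip_sumr.
  under eq_bigr do rewrite ipMr qG ipDl !ipZl.
  rewrite big_split /=; congr (_ + _).
  rewrite {2}/x ip_sumr; apply: eq_bigr => j _.
  by rewrite ipZr conj_sqrt // (ip_conj (w j) x) (ip_conj x (w j)).
have pge : \sum_i alpha i * ip (w i) (w i) <= p by rewrite p2 lerDr ip_ge0.
have bound j : sqrtC (1 - alpha j) * `|ip h (w j)| + sqrtC (1 - alpha j) * `|ip h (w j)|
    <= (1 - alpha j) / alpha j * eps j + alpha j * ip (w j) (w j).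
  apply: amgm => //; rewrite ?sqrtC_ge0 ?sqrtCK ?ip_ge0 //.
  rewrite -(orth_proj_ip h (wW j)) /eps norm2E; exact: CS.
have p3 : p <= \sum_j sqrtC (1 - alpha j) * `|ip h (w j)|.
  rewrite -(ger0_norm p_ge0) {1}p1; apply: le_trans (ler_norm_sum _ _ _) _.
  by apply: ler_sum => j _; rewrite normrM ger0_norm // sqrtC_ge0.
have p4 : p + p <= \sum_j (1 - alpha j) / alpha j * eps j + p.
  apply: le_trans (lerD p3 p3) _; rewrite -big_split /=.
  apply: le_trans (ler_sum _ (fun j _ => bound j)) _.
  by rewrite big_split /= lerD2l.
have p5 : p <= \sum_j (1 - alpha j) / alpha j * eps j by rewrite -(lerD2r p).
apply: le_trans p5 _; rewrite mulr_sumr; apply: ler_sum => j _.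
apply: ler_wpM2r => //.
have a0 : 0 < a by have [j0 ->] := a_attained.
have aj := alpha_pos j.
rewrite !mulrBl !mul1r !divff ?gt_eqF // lerD2r.
by rewrite ler_pV2 ?inE ?unitfE ?gt_eqF ?aj ?a0.
Qed.
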